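(* Fix a constant $0<\alpha<1$. There exist constants $c>0$ and $n_0$ (depending only on $\alpha$) such that for all $n\ge n_0$ and all $D$ with $1\le D\le \alpha n$: if a deterministic algorithm together with advice assignments accomplishes (even anonymous) topology recognition within time $D$ on every graph of size $n$ and diameter $D$, then the size of advice is at least $c\,n\log n$. That is, the size of advice needed is in $\Omega(n\log n)$.
   Context: Graphs are finite, simple, undirected, connected, with no node labels; at each node of degree $d$ the incident edges carry distinct port numbers $0,\dots,d-1$ (no coherence between endpoints). Isomorphism is a bijection of nodes preserving edges and port numbers at both endpoints. Size = number of nodes; $\log$ is base 2. Communication model (LOCAL): synchronous rounds, all nodes start simultaneously; in each round every node may send arbitrary messages to all neighbours, receives their messages (knowing the arrival port), and performs arbitrary local computation. Initially a node knows only its degree and its advice. Advice: an oracle knowing the graph assigns each node a binary string; the size of advice is the maximum string length. All nodes run the same deterministic algorithm. Anonymous topology recognition: every node outputs a port-labeled graph isomorphic to $G$. Time is the number of rounds until all nodes have output. *)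

(* Defs.v *)
From mathcomp Require Import all_boot.
From Stdlib Require Import Reals.

Set Implicit Arguments.
Unset Strict Implicit.
Unset Printing Implicit Defensive.

(* "dist(u,v) <= k" for a graph on 'I_n given by degrees and port maps:
   nb u p is the neighbour of u reached through port p (p < deg u). *)
Fixpoint reach (n : nat) (deg : 'I_n -> nat) (nb : 'I_n -> nat -> 'I_n)
  (k : nat) (u v : 'I_n) : Prop :=
  match k with
  | 0 => u = v
  | k'.+1 => reach deg nb k' u v \/ exists2 p, p < deg u & reach deg nb k' (nb u p) v
  end.

(* At node v the incident edges carry ports 0..deg v - 1; port p of v leads
   to node nb v p, where that edge has port bp v p. Values of nb/bp at
   p >= deg v are irrelevant (never used). *)
Record PGraph (n : nat) : Type := PG {
  deg : 'I_n -> nat;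
  nb  : 'I_n -> nat -> 'I_n;
  bp  : 'I_n -> nat -> nat;
  bp_lt : forall v p, p < deg v -> bp v p < deg (nb v p);
  nb_back : forall v p, p < deg v -> nb (nb v p) (bp v p) = v;
  bp_back : forall v p, p < deg v -> bp (nb v p) (bp v p) = p;
  nb_noloop : forall v p, p < deg v -> nb v p <> v;
  nb_inj : forall v p q, p < deg v -> q < deg v -> nb v p = nb v q -> p = q;
  pg_connected : exists k, forall u v, reach deg nb k u v
}.

Definition diameter (n : nat) (G : PGraph n) (D : nat) : Prop :=
  (forall u v, reach (deg G) (nb G) D u v) /\
  (exists u v, ~ reach (deg G) (nb G) D.-1 u v).

Definition pg_iso (n m : nat) (G : PGraph n) (H : PGraph m) : Prop :=
  exists f : 'I_n -> 'I_m, bijective f /\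
    forall v, deg H (f v) = deg G v /\
      forall p, p < deg G v ->
        nb H (f v) p = f (nb G v p) /\ bp H (f v) p = bp G v p.

(* A deterministic LOCAL algorithm (same for all nodes), with arbitrary state
   type S and message type M.
   - a_init d a : initial state of a node of degree d with advice a;
   - a_send s p : message sent on port p by a node in state s;
   - a_update s ms : new state after receiving ms (ms`_p = message arriving
     through port p, size ms = degree) -- arbitrary local computation;
   - a_out s : Some H if the node outputs the graph H in state s. *)
Record Alg (S M : Type) : Type := MkAlg {
  a_init : nat -> seq bool -> S;
  a_send : S -> nat -> M;
  a_update : S -> seq M -> S;
  a_out : S -> option {m : nat & PGraph m}
}.

Fixpoint run (S M : Type) (A : Alg S M) (n : nat) (G : PGraph n)
  (adv : 'I_n -> seq bool) (t : nat) : 'I_n -> S :=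
  match t with
  | 0 => fun v => a_init A (deg G v) (adv v)
  | t'.+1 => fun v =>
      let s := run A G adv t' in
      a_update A (s v) [seq a_send A (s (nb G v p)) (bp G v p) | p <- iota 0 (deg G v)]
  end.

Definition recognizes_within (S M : Type) (A : Alg S M) (n : nat) (G : PGraph n)
  (adv : 'I_n -> seq bool) (T : nat) : Prop :=
  forall v, exists t, t <= T /\
    exists H, a_out A (run A G adv t v) = Some H /\ pg_iso G (projT2 H) /\
      (forall t', t' < t -> a_out A (run A G adv t' v) = None).

Definition advice_size (n : nat) (adv : 'I_n -> seq bool) : nat :=
  \max_(v < n) size (adv v).

Definition log2 (x : R) : R := (ln x / ln 2)%R.

(* Main.v *)
Require Import Defs.
From mathcomp Require Import all_boot.
From mathcomp Require Import all_fingroup zify.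
From Stdlib Require Import ClassicalEpsilon.
Set Implicit Arguments.
Unset Strict Implicit.
Unset Printing Implicit Defensive.


Definition bmp (u x : nat) : nat := if u <= x then x.+1 else x.
Definition ubmp (u w : nat) : nat := if u < w then w.-1 else w.

Lemma bmp_ne u x : bmp u x <> u. Proof. rewrite /bmp; case: ifP; lia. Qed.
Lemma ubmp_bmp u x : ubmp u (bmp u x) = x. Proof. rewrite /bmp /ubmp; do 2 case: ifP; lia. Qed.
Lemma bmp_ubmp u w : w <> u -> bmp u (ubmp u w) = w. Proof. rewrite /bmp /ubmp; do 2 case: ifP; lia. Qed.
Lemma bmp_inj u : injective (bmp u). Proof. by move=> x y h; rewrite -(ubmp_bmp u x) h ubmp_bmp. Qed.


Lemma bmp_le K u x : x < K -> bmp u x <= K. Proof. rewrite /bmp; case: ifP; lia. Qed.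
Lemma ubmp_lt K u w : u < K -> w <= K -> w <> u -> ubmp u w < K. Proof. rewrite /ubmp; case: ifP; lia. Qed.
Lemma bmp_Km1 K u : u < K -> bmp u K.-1 = K. Proof. rewrite /bmp; case: ifP; lia. Qed.

Section NatGraph.
Variables (n K : nat) (pi piinv : nat -> nat -> nat).
Hypothesis P1 : forall u p, u < K -> p < K -> pi u p < K.
Hypothesis P2 : forall u q, u < K -> q < K -> piinv u q < K.
Hypothesis P3 : forall u p, u < K -> p < K -> piinv u (pi u p) = p.
Hypothesis P4 : forall u q, u < K -> q < K -> pi u (piinv u q) = q.
Hypothesis hK : 0 < K.
Hypothesis hKn : K < n.

Definition degN u := if u < K then K else if u == K then (if K.+1 < n then K.+1 else K)
   else (if u.+1 < n then 2 else 1).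
Definition nbN u p := if u < K then bmp u (pi u p) else if u == K then (if p < K then p else K.+1)
   else (if p == 0 then u.-1 else u.+1).
Definition bpN u p := if u < K then (let w := bmp u (pi u p) in
     if w == K then u else piinv w (ubmp w u))
   else if u == K then (if p < K then piinv p K.-1 else 0)
   else (if p == 0 then (if u.-1 == K then K else 1) else 0).

Ltac unf := rewrite /degN /nbN /bpN /bmp /ubmp.

Lemma degN_lt u : u < K -> degN u = K. Proof. by rewrite /degN => ->. Qed.
Lemma degN_K : degN K = if K.+1 < n then K.+1 else K. Proof. by rewrite /degN ltnn eqxx. Qed.
Lemma degN_gt u : K < u -> degN u = if u.+1 < n then 2 else 1.
Proof. move=> h; have e1 : (u < K) = false by apply/negbTE; lia.
have e2 : (u == K) = false by apply/negbTE; lia.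
by rewrite /degN e1 e2. Qed.
Lemma nbN_lt u p : u < K -> nbN u p = bmp u (pi u p). Proof. by rewrite /nbN => ->. Qed.
Lemma nbN_K p : nbN K p = if p < K then p else K.+1. Proof. by rewrite /nbN ltnn eqxx. Qed.
Lemma nbN_gt u p : K < u -> nbN u p = if p == 0 then u.-1 else u.+1.
Proof. move=> h; have e1 : (u < K) = false by apply/negbTE; lia.
have e2 : (u == K) = false by apply/negbTE; lia.
by rewrite /nbN e1 e2. Qed.
Lemma bpN_lt u p : u < K -> bpN u p = if bmp u (pi u p) == K then u else piinv (bmp u (pi u p)) (ubmp (bmp u (pi u p)) u).
Proof. by rewrite /bpN => ->. Qed.
Lemma bpN_K p : bpN K p = if p < K then piinv p K.-1 else 0. Proof. by rewrite /bpN ltnn eqxx. Qed.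
Lemma bpN_gt u p : K < u -> bpN u p = if p == 0 then (if u.-1 == K then K else 1) else 0.
Proof. move=> h; have e1 : (u < K) = false by apply/negbTE; lia.
have e2 : (u == K) = false by apply/negbTE; lia.
by rewrite /bpN e1 e2. Qed.


Lemma axAll u p : u < n -> p < degN u ->
  [/\ nbN u p < n, bpN u p < degN (nbN u p), nbN (nbN u p) (bpN u p) = u
      & bpN (nbN u p) (bpN u p) = p].
Proof.
move=> hu; case: (ltnP u K) => h1.
  rewrite degN_lt // => hp; rewrite nbN_lt // bpN_lt //.
  have hx := P1 h1 hp; set x := pi u p in hx *.
  have hw := bmp_le u hx; have hne : bmp u x <> u := @bmp_ne u x.
  set w := bmp u x in hw hne *.
  case: (eqVneq w K) => hwK.
    have hxK : x = K.-1.
      by apply: (@bmp_inj u); rewrite -/w hwK bmp_Km1.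
    rewrite hwK; rewrite degN_K nbN_K bpN_K h1 -hxK /x P3 //.
    split; [lia| case: ifP; lia | by [] | by []].
  have hwlt : w < K by lia.
  have hy := @ubmp_lt K w u hwlt (ltnW h1) (nesym hne).
  rewrite degN_lt // nbN_lt // bpN_lt // P4 // bmp_ubmp; last exact: nesym.
  split; [lia | exact: P2 | by [] |].
  rewrite ifF; last by apply/eqP; lia.
  by rewrite /w ubmp_bmp P3.
case: (eqVneq u K) => h2.
  subst u; rewrite degN_K nbN_K bpN_K => hp.
  case: (ltnP p K) => hpK.
    have hq : piinv p K.-1 < K by apply: P2; lia.
    rewrite degN_lt // nbN_lt // bpN_lt // P4 //; last lia.
    rewrite bmp_Km1 // eqxx.
    split; [lia | by [] | by [] | by []].
  have hpe : p = K by move: hp; case: ifP; lia.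
  have hKn1 : K.+1 < n by move: hp; case: ifP; lia.
  rewrite degN_gt // nbN_gt // bpN_gt // /= eqxx hpe.
  split; [lia | case: ifP; lia | by [] | by []].
have h3 : K < u by lia.
rewrite degN_gt // nbN_gt // bpN_gt // => hp.
case: (eqVneq p 0) => hp0.
  case: (eqVneq u.-1 K) => hu1.
    rewrite hu1 degN_K nbN_K bpN_K ltnn.
    split; [lia | case: ifP; lia | lia | by []].
  rewrite degN_gt; last lia.
  rewrite nbN_gt; last lia.
  rewrite bpN_gt; last lia.
  rewrite /=. split; [lia | case: ifP; lia | lia | by []].
have hun : u.+1 < n by move: hp; case: ifP; lia.
rewrite degN_gt; last lia.
rewrite nbN_gt; last lia.
rewrite bpN_gt; last lia.
have e : (u == K) = false by apply/negbTE; lia.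
rewrite /= e.
split; [lia | case: ifP; lia | lia | move: hp hp0; case: ifP => _; lia].
Qed.

Lemma axNL u p : u < n -> p < degN u -> nbN u p <> u.
Proof.
move=> hu; case: (ltnP u K) => h1.
  by rewrite degN_lt // => hp; rewrite nbN_lt //; apply: bmp_ne.
case: (eqVneq u K) => h2.
  subst u; rewrite degN_K nbN_K => hp; case: ifP; lia.
rewrite degN_gt ?nbN_gt; try lia. move=> hp; case: ifP; lia.
Qed.

Lemma axInj u p q : u < n -> p < degN u -> q < degN u -> nbN u p = nbN u q -> p = q.
Proof.
move=> hu; case: (ltnP u K) => h1.
  rewrite degN_lt // => hp hq; rewrite !nbN_lt // => /(@bmp_inj u) e.
  by rewrite -(P3 h1 hp) e P3.
case: (eqVneq u K) => h2.
  subst u; rewrite degN_K !nbN_K => hp hq; do 2 case: ifP; move: hp hq; case: ifP; lia.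
rewrite degN_gt ?nbN_gt; try lia. move=> hp hq; do 2 case: ifP; move: hp hq; case: ifP; lia.
Qed.
End NatGraph.

Section Perm.
Variables (K : nat) (s : {ffun 'I_K -> {perm 'I_K}}).
Definition piS (u p : nat) : nat :=
  match (insub u : option 'I_K), (insub p : option 'I_K) with
  | Some u', Some p' => val (s u' p') | _, _ => 0 end.
Definition piinvS (u p : nat) : nat :=
  match (insub u : option 'I_K), (insub p : option 'I_K) with
  | Some u', Some p' => val ((s u')^-1%g p') | _, _ => 0 end.

Lemma piS_E u p (hu : u < K) (hp : p < K) : piS u p = val (s (Ordinal hu) (Ordinal hp)).
Proof. by rewrite /piS !insubT. Qed.
Lemma piinvS_E u p (hu : u < K) (hp : p < K) : piinvS u p = val ((s (Ordinal hu))^-1%g (Ordinal hp)).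
Proof. by rewrite /piinvS !insubT. Qed.

Lemma PS1 u p : u < K -> p < K -> piS u p < K.
Proof. by move=> hu hp; rewrite (piS_E hu hp) ltn_ord. Qed.
Lemma PS2 u p : u < K -> p < K -> piinvS u p < K.
Proof. by move=> hu hp; rewrite (piinvS_E hu hp) ltn_ord. Qed.
Lemma PS3 u p : u < K -> p < K -> piinvS u (piS u p) = p.
Proof.
move=> hu hp; have h := PS1 hu hp.
rewrite (piS_E hu hp) in h *. rewrite (piinvS_E hu h).
by rewrite (_ : Ordinal h = s (Ordinal hu) (Ordinal hp)) ?permK //; apply: val_inj.
Qed.
Lemma PS4 u p : u < K -> p < K -> piS u (piinvS u p) = p.
Proof.
move=> hu hp; have h := PS2 hu hp.
rewrite (piinvS_E hu hp) in h *. rewrite (piS_E hu h).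
by rewrite (_ : Ordinal h = (s (Ordinal hu))^-1%g (Ordinal hp)) ?permKV //; apply: val_inj.
Qed.
End Perm.

Section Build.
Variables (n K : nat) (s : {ffun 'I_K -> {perm 'I_K}}) (hK : 0 < K) (hKn : K < n).
Let pi := piS s.
Let piinv := piinvS s.
Let AX u p (hu : u < n) (hp : p < degN n K u) :=
  axAll (@PS1 K s) (@PS2 K s) (@PS3 K s) (@PS4 K s) hK hKn hu hp.

Definition gdeg (v : 'I_n) := degN n K (val v).
Definition gnb (v : 'I_n) p : 'I_n := insubd v (nbN K pi (val v) p).
Definition gbp (v : 'I_n) p := bpN K pi piinv (val v) p.

Lemma gnbE v p : p < gdeg v -> val (gnb v p) = nbN K pi (val v) p.
Proof. move=> hp; rewrite /gnb insubdK //; by case: (AX (ltn_ord v) hp). Qed.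

Lemma g_bp_lt v p : p < gdeg v -> gbp v p < gdeg (gnb v p).
Proof. move=> hp; rewrite /gbp /gdeg gnbE //; by case: (AX (ltn_ord v) hp). Qed.
Lemma g_nb_back v p : p < gdeg v -> gnb (gnb v p) (gbp v p) = v.
Proof.
move=> hp; apply: val_inj; rewrite gnbE; last exact: g_bp_lt.
rewrite /gbp gnbE //; by case: (AX (ltn_ord v) hp).
Qed.
Lemma g_bp_back v p : p < gdeg v -> gbp (gnb v p) (gbp v p) = p.
Proof. move=> hp; rewrite /gbp gnbE //; by case: (AX (ltn_ord v) hp). Qed.
Lemma g_noloop v p : p < gdeg v -> gnb v p <> v.
Proof.
move=> hp e; have := congr1 val e; rewrite gnbE //.
exact: (axNL hK hKn (ltn_ord v) hp).
Qed.
Lemma g_inj v p q : p < gdeg v -> q < gdeg v -> gnb v p = gnb v q -> p = q.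
Proof.
move=> hp hq e; have := congr1 val e; rewrite !gnbE //.
exact: (axInj (@PS3 K s) hK hKn (ltn_ord v) hp hq).
Qed.
End Build.

Section Reach.
Variables (n : nat) (deg : 'I_n -> nat) (nb : 'I_n -> nat -> 'I_n).
Lemma reach_refl k u : reach deg nb k u u.
Proof. by elim: k => [|k IH] //=; left. Qed.
Lemma reach_S k u v : reach deg nb k u v -> reach deg nb k.+1 u v.
Proof. by move=> h; left. Qed.
Lemma reach_le k k' u v : k <= k' -> reach deg nb k u v -> reach deg nb k' u v.
Proof.
move=> hk; rewrite -(subnKC hk); elim: (k' - k) => [|m IH]; first by rewrite addn0.
by move=> h; rewrite addnS; apply: reach_S; apply: IH.
Qed.
Lemma reach_trans a b u w v : reach deg nb a u w -> reach deg nb b w v -> reach deg nb (a + b) u v.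
Proof.
elim: a u => [|a IH] u /=; first by move=> -> .
move=> [h|[p hp h]] h2.
  by apply: reach_S; apply: IH.
by right; exists p => //; apply: IH.
Qed.
Lemma reach_edge u p : p < deg u -> reach deg nb 1 u (nb u p).
Proof. by move=> hp; right; exists p. Qed.
Lemma reach_pot (h : 'I_n -> nat) :
  (forall u p, p < deg u -> h (nb u p) <= (h u).+1) ->
  forall t u v, reach deg nb t u v -> h v <= h u + t.
Proof.
move=> hh; elim=> [|t IH] u v /=; first by move=> ->; rewrite addn0.
move=> [H|[p hp H]]; first by have := IH _ _ H; lia.
have := IH _ _ H; have := hh _ _ hp; lia.
Qed.
End Reach.

Lemma reach_sym n (G : PGraph n) k u v : reach (deg G) (nb G) k u v -> reach (deg G) (nb G) k v u.
Proof.
elim: k u => [|k IH] u /=; first by move=> ->.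
move=> [h|[p hp h]]; first by left; apply: IH.
have h1 := IH _ h.
have h2 : reach (deg G) (nb G) 1 (nb G u p) u.
  rewrite -{2}(nb_back hp); apply: reach_edge; exact: bp_lt.
by have := reach_trans h1 h2; rewrite addn1.
Qed.

Section Diam.
Variables (n K : nat) (s : {ffun 'I_K -> {perm 'I_K}}) (hK : 0 < K) (hKn : K < n).
Notation gd := (@gdeg n K).
Notation gn := (@gnb n K s).
Let degN_gt := @degN_gt n K hK hKn.
Let nbN_gt := @nbN_gt n K (piS s) hK hKn.
Definition on (a : nat) : 'I_n := insubd (Ordinal hKn) a.
Lemma val_on a : a < n -> val (on a) = a.
Proof. by move=> h; rewrite /on insubdK. Qed.
Lemma on_val (u : 'I_n) : on (val u) = u.
Proof. by apply: val_inj; rewrite val_on ?ltn_ord. Qed.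

Lemma edge_on a p b : a < n -> p < degN n K a -> nbN K (piS s) a p = b -> reach gd gn 1 (on a) (on b).
Proof.
move=> ha hp hb.
have hp' : p < gd (on a) by rewrite /gdeg val_on.
have e : gn (on a) p = on b.
  have [h1 _ _ _] := (axAll (@PS1 K s) (@PS2 K s) (@PS3 K s) (@PS4 K s) hK hKn ha hp).
  apply: val_inj; rewrite gnbE // !val_on // -?hb //.
by rewrite -e; apply: reach_edge.
Qed.

Lemma step_up a : K <= a -> a.+1 < n -> reach gd gn 1 (on a) (on a.+1).
Proof.
move=> h1 h2; case: (eqVneq a K) => hK'.
  subst a; apply: (@edge_on K K); [lia| by rewrite degN_K h2 | by rewrite nbN_K ltnn].
apply: (@edge_on a 1); [lia | rewrite degN_gt ?h2 //; lia | rewrite nbN_gt //; lia].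
Qed.
Lemma step_down a : K < a -> a < n -> reach gd gn 1 (on a) (on a.-1).
Proof.
move=> h1 h2; apply: (@edge_on a 0); [lia | rewrite degN_gt //; case: ifP => //| by rewrite nbN_gt].
Qed.
Lemma path_up a m : K <= a -> a + m < n -> reach gd gn m (on a) (on (a + m)).
Proof.
move=> h1; elim: m => [|m IH] h2; first by rewrite addn0; apply: reach_refl.
have := reach_trans (IH ltac:(lia)) (@step_up (a + m) ltac:(lia) ltac:(lia)).
by rewrite addn1 addnS.
Qed.
Lemma path_down a m : K <= a -> a + m < n -> reach gd gn m (on (a + m)) (on a).
Proof.
move=> h1; elim: m => [|m IH] h2; first by rewrite addn0; apply: reach_refl.
have hs := @step_down (a + m.+1) ltac:(lia) ltac:(lia).
rewrite (_ : (a + m.+1).-1 = a + m) in hs; last lia.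
have := reach_trans hs (IH ltac:(lia)).
by rewrite add1n addnS.
Qed.
Lemma cl_cl a b : a <= K -> b <= K -> a <> b -> reach gd gn 1 (on a) (on b).
Proof.
move=> ha hb hab; case: (ltnP a K) => haK.
  have hy : ubmp a b < K by rewrite /ubmp; case: ifP; lia.
  apply: (@edge_on a (piinvS s a (ubmp a b))); [lia | rewrite degN_lt //; exact: PS2 |].
  by rewrite nbN_lt // PS4 // bmp_ubmp //; apply: nesym.
have -> : a = K by lia.
apply: (@edge_on K b); [lia | rewrite degN_K; case: ifP; lia | rewrite nbN_K; case: ifP; lia].
Qed.

Lemma all_reach (u v : 'I_n) : reach gd gn (n - K) u v.
Proof.
suff H : forall a b, a < n -> b < n -> reach gd gn (n - K) (on a) (on b).
  by rewrite -(on_val u) -(on_val v); apply: H; apply: ltn_ord.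
move=> a b ha hb.
case: (leqP a K) => haK; case: (leqP b K) => hbK.
- case: (eqVneq a b) => [->|hab]; first exact: reach_refl.
  apply: (@reach_le _ _ _ 1); [lia | apply: cl_cl; [lia|lia|exact/eqP]].
- have h1 : reach gd gn 1 (on a) (on K).
    case: (eqVneq a K) => [->|hne]; [exact: reach_S (reach_refl _ _ _ _) | apply: cl_cl; [lia|lia|exact/eqP]].
  have h2 : reach gd gn (b - K) (on K) (on b).
    have hh : K + (b - K) < n by lia.
    by have := path_up (leqnn K) hh; rewrite (_ : K + (b - K) = b) //; lia.
  apply: (reach_le _ (reach_trans h1 h2)); lia.
- have h1 : reach gd gn 1 (on K) (on b).
    case: (eqVneq b K) => [->|hne]; [exact: reach_S (reach_refl _ _ _ _) | apply: cl_cl; [lia|lia|apply/eqP; rewrite eq_sym //]].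
  have h2 : reach gd gn (a - K) (on a) (on K).
    have hh : K + (a - K) < n by lia.
    by have := path_down (leqnn K) hh; rewrite (_ : K + (a - K) = a) //; lia.
  apply: (reach_le _ (reach_trans h2 h1)); lia.
- case: (leqP a b) => hab.
    have h2 : reach gd gn (b - a) (on a) (on b).
      have hh : a + (b - a) < n by lia.
      have ha' : K <= a by lia.
      by have := path_up ha' hh; rewrite (_ : a + (b - a) = b) //; lia.
    apply: (reach_le _ h2); lia.
  have h2 : reach gd gn (a - b) (on a) (on b).
    have hh : b + (a - b) < n by lia.
    have hb' : K <= b by lia.
    by have := path_down hb' hh; rewrite (_ : b + (a - b) = a) //; lia.
  apply: (reach_le _ h2); lia.
Qed.

Definition hpot (u : 'I_n) := if val u < K then 0 else val u - K + 1.
Lemma hpot_step u p : p < gd u -> hpot (gn u p) <= (hpot u).+1.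
Proof.
move=> hp; rewrite /hpot gnbE //.
move: hp; rewrite /gdeg; have := ltn_ord u; move: (val u) => a ha.
case: (ltnP a K) => h1.
  rewrite degN_lt // nbN_lt // => hp; have := bmp_le a (PS1 s h1 hp); case: ifP; lia.
case: (eqVneq a K) => h2.
  subst a; rewrite degN_K nbN_K; case: ifP; case: ifP; case: ifP; lia.
rewrite degN_gt ?nbN_gt; try lia. case: ifP; case: ifP; case: ifP; lia.
Qed.

Lemma not_reach : ~ reach gd gn (n - K).-1 (on 0) (on n.-1).
Proof.
move=> H; have := reach_pot hpot_step H.
rewrite /hpot !val_on; try lia.
case: ifP; case: ifP; lia.
Qed.
End Diam.

Definition mkG n K (s : {ffun 'I_K -> {perm 'I_K}}) (hK : 0 < K) (hKn : K < n) : PGraph n :=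
  @PG n (@gdeg n K) (@gnb n K s) (@gbp n K s)
    (@g_bp_lt n K s hK hKn) (@g_nb_back n K s hK hKn) (@g_bp_back n K s hK hKn)
    (@g_noloop n K s hK hKn) (@g_inj n K s hK hKn)
    (ex_intro _ (n - K) (@all_reach n K s hK hKn)).

Lemma mkG_diam n K s hK hKn : diameter (@mkG n K s hK hKn) (n - K).
Proof.
split; first exact: all_reach.
by exists (on hKn 0), (on hKn n.-1); apply: not_reach.
Qed.

Section Inj.
Variables (n K : nat) (hK : 0 < K) (hKn : K < n).
Lemma mkG_inj (s1 s2 : {ffun 'I_K -> {perm 'I_K}}) :
  (forall v p, p < deg (mkG s1 hK hKn) v -> nb (mkG s1 hK hKn) v p = nb (mkG s2 hK hKn) v p) ->
  s1 = s2.
Proof.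
move=> H; apply/ffunP => u; apply/permP => p.
have hu : (u : nat) < n := ltn_trans (ltn_ord u) hKn.
have hp : (p : nat) < gdeg K (on hKn u) by rewrite /gdeg (val_on hKn) // degN_lt.
have := H _ _ hp => /= /(congr1 val).
rewrite (gnbE _ hK hKn) // (gnbE _ hK hKn) // (val_on hKn) // !nbN_lt // => /(@bmp_inj u).
rewrite !(piS_E _ (ltn_ord u) (ltn_ord p)) => e; apply: val_inj.
have e1 : Ordinal (ltn_ord u) = u by apply: val_inj.
have e2 : Ordinal (ltn_ord p) = p by apply: val_inj.
by move: e; rewrite e1 e2.
Qed.
End Inj.

Section Local.
Variables (n K : nat) (hK : 0 < K) (hKn : K < n).
Variables (S M : Type) (A : Alg S M).
Variables (s1 s2 : {ffun 'I_K -> {perm 'I_K}}) (adv1 adv2 : 'I_n -> seq bool).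
Hypothesis hadv : forall v, adv1 v = adv2 v.
Hypothesis hbp : forall p, p < K -> bpN K (piS s1) (piinvS s1) K p = bpN K (piS s2) (piinvS s2) K p.
Notation G1 := (mkG s1 hK hKn).
Notation G2 := (mkG s2 hK hKn).

Lemma run0_eq v : run A G1 adv1 0 v = run A G2 adv2 0 v.
Proof. by rewrite /= hadv. Qed.

Lemma nbN_indep pi1 pi2 u p : K <= u -> nbN K pi1 u p = nbN K pi2 u p.
Proof. by move=> h; rewrite /nbN ltnNge h. Qed.

Lemma local t (x : 'I_n) : K <= val x -> t <= val x - K + 1 -> run A G1 adv1 t x = run A G2 adv2 t x.
Proof.
elim: t x => [|t IH] x hx ht; first exact: run0_eq.
rewrite /= IH; [|lia|lia].
congr (a_update _ _ _); apply/eq_in_map => p; rewrite mem_iota add0n => /andP [_ hp].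
have hp2 : p < gdeg K x by [].
have enb : gnb s1 x p = gnb s2 x p.
  by rewrite /gnb (nbN_indep (piS s1) (piS s2)).
have ebp : gbp s1 x p = gbp s2 x p.
  rewrite /gbp; case: (eqVneq (val x) K) => e.
    rewrite e; case: (ltnP p K) => h; last by rewrite !bpN_K ltnNge h.
    by have := hbp h; rewrite !bpN_K h.
  by rewrite !(bpN_gt _ _ hK hKn) //; lia.
rewrite /= enb ebp; congr (a_send _ _ _).
have hv := gnbE s2 hK hKn hp2.
case: (eqVneq (val x) K) => e.
  case: (ltnP p K) => hpK.
    have -> : t = 0 by lia.
    exact: run0_eq.
  apply: IH; rewrite hv e nbN_K ltnNge hpK /=; lia.
apply: IH; rewrite hv (nbN_gt _ hK hKn); try lia; case: ifP; lia.
Qed.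
End Local.

Fixpoint code (s : seq bool) : nat := if s is b :: s' then b + (code s').*2 else 1.
Lemma code_pos s : 0 < code s.
Proof. elim: s => [|b s IH] //=; lia. Qed.
Lemma code_lt s : code s < 2 ^ (size s).+1.
Proof. elim: s => [|b s IH] //=; rewrite expnS; lia. Qed.
Lemma code_inj : injective code.
Proof.
elim=> [|b s IH] [|b' s'] //=.
- by have := code_pos s'; lia.
- by have := code_pos s; lia.
move=> e; have eb : b = b' by case: b b' e => [] [] /=; lia.
subst b'; congr (_ :: _); apply: IH; lia.
Qed.

Fixpoint firstSome X (l : seq (option X)) : option X :=
  match l with [::] => None | Some x :: _ => Some x | None :: l' => firstSome l' end.

Lemma firstSome_map X (f : nat -> option X) t m x : t < m -> f t = Some x ->
  (forall t', t' < t -> f t' = None) -> firstSome [seq f i | i <- iota 0 m] = Some x.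
Proof.
move=> htm hft hb.
suff H : forall a, a <= t -> t < a + m -> firstSome [seq f i | i <- iota a m] = Some x by apply: H.
elim: m {htm} => [|m IH] a h1 h2; first lia.
rewrite /=; case: (eqVneq a t) => e; first by rewrite e hft.
rewrite hb; last lia.
apply: IH; lia.
Qed.

Lemma inord_inj m x y : x <= m -> y <= m -> (inord x : 'I_m.+1) = inord y -> x = y.
Proof. by move=> hx hy /(congr1 (@nat_of_ord _)); rewrite !inordK. Qed.

Section Main.
Variables (n D : nat) (hD : 0 < D) (hDn : D < n).
Variables (S M : Type) (A : Alg S M) (oracle : PGraph n -> 'I_n -> seq bool).
Hypothesis hyp : forall G, diameter G D -> recognizes_within A G (oracle G) D.

Let K := n - D.
Let hK : 0 < K. Proof. rewrite /K; lia. Qed.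
Let hKn : K < n. Proof. rewrite /K; lia. Qed.
Notation Fam := {ffun 'I_K -> {perm 'I_K}}.
Let G (s : Fam) := mkG s hK hKn.
Let adv (s : Fam) := oracle (G s).
Let L := \max_(s : Fam) advice_size (adv s).
Let vfar := on hKn n.-1.

Lemma diamG (s : Fam) : diameter (G s) D.
Proof. have := mkG_diam s hK hKn; by rewrite (_ : n - K = D) //; rewrite /K; lia. Qed.

Definition outs (s : Fam) := firstSome [seq a_out A (run A (G s) (adv s) t vfar) | t <- iota 0 D.+1].

Lemma outs_spec (s : Fam) : exists H, outs s = Some H /\ pg_iso (G s) (projT2 H).
Proof.
have [t [ht [H [h1 [h2 h3]]]]] := hyp (diamG s) vfar.
exists H; split => //; apply: (firstSome_map (t := t)) => //; lia.
Qed.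

Definition Phi (s : Fam) : {ffun 'I_n -> 'I_(2 ^ L.+1).+1} * {ffun 'I_K -> 'I_K.+1} :=
  ([ffun v => inord (code (adv s v))],
   [ffun p : 'I_K => inord (bpN K (piS s) (piinvS s) K p)]).

Lemma size_adv s v : size (adv s v) <= L.
Proof.
rewrite /L; apply: (@leq_trans (advice_size (adv s))); last by rewrite (bigD1 s) //=; apply: leq_maxl.
rewrite /advice_size; by rewrite (bigD1 v) //=; apply: leq_maxl.
Qed.

Lemma bpK_lt (s : Fam) p : p < K -> bpN K (piS s) (piinvS s) K p < K.
Proof. move=> h; rewrite /bpN ltnn eqxx h; apply: (PS2 s) => //; lia. Qed.

Lemma Phi_outs s1 s2 : Phi s1 = Phi s2 -> outs s1 = outs s2.
Proof.
case=> /ffunP e1 /ffunP e2.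
have hadv : forall v, adv s1 v = adv s2 v.
  move=> v; have := e1 v; rewrite !ffunE => /inord_inj e; apply: code_inj; apply: e.
    by have := code_lt (adv s1 v); have := size_adv s1 v; move=> h1 h2; apply: leq_trans (ltnW h2) _; rewrite leq_exp2l.
  by have := code_lt (adv s2 v); have := size_adv s2 v; move=> h1 h2; apply: leq_trans (ltnW h2) _; rewrite leq_exp2l.
have hbp : forall p, p < K -> bpN K (piS s1) (piinvS s1) K p = bpN K (piS s2) (piinvS s2) K p.
  move=> p hp; have := e2 (Ordinal hp); rewrite !ffunE /= => /inord_inj; apply.
    exact: ltnW (bpK_lt s1 hp).
  exact: ltnW (bpK_lt s2 hp).
rewrite /outs; congr firstSome; apply/eq_in_map => t; rewrite mem_iota add0n => /andP [_ ht].
rewrite (local hK hKn A hadv hbp) //; rewrite /vfar (val_on hKn); rewrite /K; lia.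
Qed.

Definition isob m (G1 : PGraph n) (H : PGraph m) (f : 'I_n -> 'I_m) :=
  bijective f /\ forall v, deg H (f v) = deg G1 v /\
      forall p, p < deg G1 v -> nb H (f v) p = f (nb G1 v p) /\ bp H (f v) p = bp G1 v p.

Definition Pg (s : Fam) (g : 'I_n -> nat) := forall H, outs s = Some H ->
  exists f, isob (G s) (projT2 H) f /\ forall v, g v = val (f v).

Lemma gex (s : Fam) : exists g, Pg s g.
Proof.
have [H [e [f hf]]] := outs_spec s.
exists (fun v => val (f v)) => H'; rewrite e => -[<-]; by exists f.
Qed.

Definition gch (s : Fam) := proj1_sig (constructive_indefinite_description _ (gex s)).
Lemma gchP (s : Fam) : Pg s (gch s).
Proof. exact: proj2_sig (constructive_indefinite_description _ (gex s)). Qed.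

Definition psi (s : Fam) := (Phi s, [ffun v => inord (gch s v) : 'I_n.+1]).

Lemma psi_inj : injective psi.
Proof.
move=> s1 s2 e; have eP : Phi s1 = Phi s2 := congr1 fst e.
have /ffunP eg := congr1 snd e.
have eo := Phi_outs eP.
have [H [e1 _]] := outs_spec s1.
have e2 : outs s2 = Some H by rewrite -eo.
have [f1 [[bf1 hf1] hg1]] := gchP e1.
have [f2 [[bf2 hf2] hg2]] := gchP e2.
have cm : n = projT1 H by have := bij_eq_card bf1; rewrite !card_ord.
have key : forall (x : 'I_(projT1 H)), (x : nat) <= n.
  by move: (projT1 H) cm => m <- x; apply: ltnW.
have ef : forall v, f1 v = f2 v.
  move=> v; apply: val_inj; rewrite -hg1 -hg2.
  have := eg v; rewrite !ffunE => /inord_inj; apply.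
    by rewrite hg1; apply: key.
  by rewrite hg2; apply: key.
apply: (mkG_inj (hK := hK) (hKn := hKn)) => v p hp.
have [_ h1] := hf1 v; have [_ h2] := hf2 v.
have hp2 : p < deg (G s2) v by exact: hp.
have [a1 _] := h1 p hp; have [a2 _] := h2 p hp2.
apply: (bij_inj bf1); rewrite -a1 ef a2; by rewrite -ef.
Qed.

Lemma counting : (K`!) ^ K <= ((2 ^ L.+1).+1 ^ n * K.+1 ^ K) * n.+1 ^ n.
Proof.
have := @leq_card _ _ psi psi_inj.
by rewrite !card_prod !card_ffun !card_Sn !card_ord.
Qed.

Lemma core_ex : exists G0 : PGraph n, diameter G0 D /\
  ((n - D)`!) ^ (n - D) <= ((2 ^ (advice_size (oracle G0)).+1).+1 ^ n * (n - D).+1 ^ (n - D)) * n.+1 ^ n.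
Proof.
have h0 : 0 < #|{: Fam}| by rewrite card_ffun card_Sn expn_gt0 fact_gt0.
have [s0 e] := eq_bigmax (fun s => advice_size (adv s)) h0.
exists (G s0); split; first exact: diamG.
have := counting; rewrite /L e //.
Qed.
End Main.

Lemma expn_mono a b e : a <= b -> a ^ e <= b ^ e.
Proof. move=> h; elim: e => [|e IH]; first by rewrite !expn0. rewrite !expnS; exact: leq_mul. Qed.
Lemma fact_mono m n : m <= n -> m`! <= n`!.
Proof.
elim: n => [|n IH] h; first by rewrite (_ : m = 0) //; lia.
case: (eqVneq m n.+1) => [->//|hne].
apply: leq_trans (IH ltac:(lia)) _; rewrite factS; have := fact_gt0 n; nia.
Qed.
Lemma fact_ge a b : a ^ b <= (a + b)`!.
Proof.
elim: b => [|b IH]; first by rewrite expn0 fact_gt0.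
rewrite expnS addnS factS; apply: leq_mul => //; lia.
Qed.

Lemma nat_bound n K X : 0 < K -> K <= n ->
  (K`!) ^ K <= ((2 ^ X.+1).+1 ^ n * K.+1 ^ K) * n.+1 ^ n ->
  (K %/ 2) ^ (K %/ 2 * K) <= 2 ^ (X.+2 * n) * n.+1 ^ (n * 2).
Proof.
move=> hK hKn h.
set j := K %/ 2.
have h1 : j ^ j <= K`!.
  apply: leq_trans (fact_ge j j) (fact_mono _); rewrite /j; lia.
have h2 : j ^ (j * K) <= (K`!) ^ K by rewrite expnM; exact: expn_mono.
apply: leq_trans h2 (leq_trans h _).
rewrite expnM mulnC (expnM n.+1 n 2) expnS.
have h3 : (2 ^ X.+1).+1 <= 2 ^ X.+2 by rewrite (expnS 2 X.+1); have := expn_gt0 2 X.+1; lia.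
have h4 : K.+1 ^ K <= n.+1 ^ n.
  apply: (@leq_trans (n.+1 ^ K)); [apply: expn_mono; lia | exact: leq_pexp2l].
have h5 : (2 * 2 ^ X).+1 ^ n <= (2 ^ X.+2) ^ n.
  by apply: expn_mono; rewrite !expnS; have := expn_gt0 2 X; lia.
rewrite (expnS _ 1) expn1.
move: h4 h5; move: (n.+1 ^ n) ((2 * 2 ^ X).+1 ^ n) (K.+1 ^ K) ((2 ^ X.+2) ^ n) => a b c d ha hb.
by rewrite mulnCA; apply: leq_mul => //; apply: leq_mul.
Qed.

From Stdlib Require Import Reals Lra.

Lemma INR_muln a b : INR (muln a b) = (INR a * INR b)%R.
Proof. exact: mult_INR. Qed.
Lemma INR_addn a b : INR (addn a b) = (INR a + INR b)%R.
Proof. exact: plus_INR. Qed.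
Lemma INR_expn m e : INR (expn m e) = (INR m ^ e)%R.
Proof. elim: e => [|e IH]; first by rewrite expn0. by rewrite expnS INR_muln IH. Qed.
Lemma natR a b : leq a b -> (INR a <= INR b)%R.
Proof. by move=> /leP; apply: le_INR. Qed.
Lemma ln_le' x y : (0 < x)%R -> (x <= y)%R -> (ln x <= ln y)%R.
Proof. move=> hx [h|->]; [apply: Rlt_le; exact: ln_increasing | exact: Rle_refl]. Qed.

Local Open Scope R_scope.
Lemma Rfinal (N n j K X : nat) :
  leq 1 N -> leq (muln 64 (muln N N)) n -> leq (muln n n) (muln (muln 4 (muln N N)) (muln j K)) ->
  leq n (muln j j) -> leq n.+1 (muln n n) ->
  leq (expn j (muln j K)) (muln (expn 2 (muln X.+2 n)) (expn n.+1 (muln n 2))) ->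
  / (32 * INR N ^ 2) * INR n * log2 (INR n) <= INR X.
Proof.
move=> hN hn hJK hjj hn1 hb.
have hn64 : leq 64 n by nia.
have hj1 : leq 1 j by nia.
have hK1 : leq 1 K by nia.
set x := INR n; set J := INR j; set k := INR K; set Nr := INR N; set Xr := INR X.
have Nr1 : 1 <= Nr by have := natR hN.
have x64 : 64 * Nr ^ 2 <= x.
  have := natR hn; rewrite !INR_muln (INR_IZR_INZ 64) /= /Nr /x; lra.
have x0 : 64 <= x by have := natR hn64; rewrite (INR_IZR_INZ 64) /=.
have J1 : 1 <= J by have := natR hj1.
have k1 : 1 <= k by have := natR hK1.
have l2 : 0 < ln 2 by have := ln_lt_2; lra.
have hpos : 0 < INR (expn j (muln j K)).
  rewrite INR_expn; apply: pow_lt; rewrite -/J; lra.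
have hl := ln_le' hpos (natR hb).
rewrite (INR_muln (expn 2 (muln X.+2 n)) (expn n.+1 (muln n 2))) !INR_expn ln_mult in hl; last first.
- apply: pow_lt; apply: (lt_0_INR _ (Nat.lt_0_succ _)).
- apply: pow_lt; apply: (lt_0_INR _ (Nat.lt_0_succ _)).
rewrite !ln_pow in hl; try apply: (lt_0_INR _ (Nat.lt_0_succ _)); last by rewrite -/J; lra.
rewrite -/x -/J -/k -/Xr in hl.
have e2 : INR X.+2 = Xr + 2 by rewrite !S_INR /Xr; lra.
have e3 : INR 2 = 2 by [].
rewrite !INR_muln e2 e3 S_INR -/J -/k -/x in hl.
have lx0 : 0 <= ln x by rewrite -ln_1; apply: ln_le'; lra.
have lJ0 : 0 <= ln J by rewrite -ln_1; apply: ln_le'; lra.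
have hlnJ : ln x <= 2 * ln J.
  have h := natR hjj; rewrite INR_muln -/J -/x in h.
  have := @ln_le' x (J * J) ltac:(lra) h; rewrite ln_mult; lra.
have hlx1 : ln (x + 1) <= 2 * ln x.
  have h := natR hn1; rewrite INR_muln S_INR -/x in h.
  have := @ln_le' (x + 1) (x * x) ltac:(lra) h; rewrite ln_mult; lra.
have hJK' : x * x <= 4 * Nr ^ 2 * (J * k).
  have h := natR hJK; rewrite !INR_muln (INR_IZR_INZ 4) /= -/J -/k -/x -/Nr in h; lra.
have lx6 : 6 * ln 2 <= ln x.
  have h64 : 64 = 2 ^ 6 by lra.
  have := @ln_le' 64 x ltac:(lra) x0; rewrite h64 ln_pow /=; lra.
have A1 : J * k * ln J <= (Xr + 2) * x * ln 2 + 4 * x * ln x.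
  have : 2 * x * ln (x + 1) <= 4 * x * ln x by nra.
  nra.
have A2 : x * x * ln x <= 8 * Nr ^ 2 * (J * k * ln J).
  have : x * x * ln x <= 4 * Nr ^ 2 * (J * k) * (2 * ln J).
    apply: Rmult_le_compat; nra.
  lra.
have A3 : x * ln x <= 8 * Nr ^ 2 * (Xr + 2) * ln 2 + 32 * Nr ^ 2 * ln x.
  have : x * (x * ln x) <= x * (8 * Nr ^ 2 * (Xr + 2) * ln 2 + 32 * Nr ^ 2 * ln x) by nra.
  move=> h; apply: (Rmult_le_reg_l x); lra.
have A4 : x * ln x <= 16 * Nr ^ 2 * (Xr + 2) * ln 2.
  have : 32 * Nr ^ 2 * ln x <= x / 2 * ln x by apply: Rmult_le_compat_r; lra.
  lra.
have A5 : 24 <= Xr + 2.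
  have : 64 * Nr ^ 2 * (6 * ln 2) <= x * ln x by apply: Rmult_le_compat; nra.
  move=> h.
  have hP : 0 < Nr ^ 2 * ln 2 by apply: Rmult_lt_0_compat; [apply: pow_lt; lra | lra].
  apply: (Rmult_le_reg_l (16 * (Nr ^ 2 * ln 2))); first lra.
  lra.
have A6 : x * ln x <= 32 * Nr ^ 2 * Xr * ln 2.
  have : 16 * Nr ^ 2 * (Xr + 2) * ln 2 <= 16 * Nr ^ 2 * (Xr + Xr) * ln 2.
    apply: Rmult_le_compat_r; first lra.
    apply: Rmult_le_compat_l; nra.
  lra.
rewrite /log2.
have N2 : 0 < 32 * Nr ^ 2 by nra.
apply: (Rmult_le_reg_l (32 * Nr ^ 2 * ln 2)); first nra.
have -> : 32 * Nr ^ 2 * ln 2 * (/ (32 * Nr ^ 2) * x * (ln x / ln 2)) = x * ln x.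
  by field; split; lra.
lra.
Qed.

Close Scope R_scope.

Theorem theorem5p4 :
  forall alpha : R, (0 < alpha < 1)%R ->
  exists c : R, (0 < c)%R /\
  exists n0 : nat,
  forall n D : nat, n0 <= n -> 1 <= D -> (INR D <= alpha * INR n)%R ->
  forall (S M : Type) (A : Alg S M) (oracle : PGraph n -> 'I_n -> seq bool),
    (forall G : PGraph n, diameter G D -> recognizes_within A G (oracle G) D) ->
    exists G : PGraph n, diameter G D /\
      (c * INR n * log2 (INR n) <= INR (advice_size (oracle G)))%R.
Proof.
move=> alpha [ha0 ha1].
have [N hN] := INR_unbounded (/ (1 - alpha)).
have hinv : (1 < / (1 - alpha))%R.
  rewrite -Rinv_1; apply: Rinv_lt_contravar; lra.
have hNa : (1 < INR N * (1 - alpha))%R.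
  have : (/ (1 - alpha) * (1 - alpha) = 1)%R by field; lra.
  nra.
have hN1 : 1 <= N.
  case: N hN hNa => [|N'] //= hN hNa; lra.
have NR1 : (1 <= INR N)%R by have := natR hN1.
exists (/ (32 * INR N ^ 2))%R; split.
  apply: Rinv_0_lt_compat; apply: Rmult_lt_0_compat; [lra | apply: pow_lt; lra].
exists (muln 64 (muln N N)).
move=> n D hn hD hDa S M A oracle hyp.
have key : N * D + n <= N * n.
  have hr : (INR N * INR D + INR n <= INR N * INR n)%R.
    have hn0 : (0 <= INR n)%R by apply: pos_INR.
    have : (INR N * INR D <= INR N * (alpha * INR n))%R by apply: Rmult_le_compat_l; lra.
    nra.
  apply/leP; apply: INR_le; rewrite INR_addn !INR_muln; lra.
have hn64 : 64 <= n by nia.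
have hDn : D < n by nia.
have [G [hG hc]] := core_ex hD hDn hyp.
exists G; split => //.
move: hc; set K := n - D; set X := advice_size (oracle G) => hc.
have hNK : n <= N * K by rewrite /K; nia.
have hK2 : 2 <= K by nia.
have hb := @nat_bound n K X (ltnW hK2) (leq_subr D n) hc.
apply: (@Rfinal N n (K %/ 2) K X) => //.
- have h4 : K <= 4 * (K %/ 2) by lia.
  have h5 : n <= N * (4 * (K %/ 2)) by apply: leq_trans hNK _; rewrite leq_mul2l h4 orbT.
  have := leq_mul h5 hNK; nia.
- have h4 : K <= 4 * (K %/ 2) by lia.
  have h5 : n <= N * (4 * (K %/ 2)) by apply: leq_trans hNK _; rewrite leq_mul2l h4 orbT.
  have h6 := leq_mul h5 h5.
  have h7 : 64 * (N * N) * n <= n * n by apply: leq_mul.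
  nia.
- nia.
Qed.
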